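(* Let $2\le m\le n$, let $R,S$ be complex $m\times n$ matrices and let $|\psi\rangle=|0\rangle\otimes\sum_{j,k}R_{jk}|j\rangle|k\rangle+|1\rangle\otimes\sum_{j,k}S_{jk}|j\rangle|k\rangle\in\mathbb{C}^2\otimes\mathbb{C}^m\otimes\mathbb{C}^n$, with associated matrix pencil $\mathcal{P}=\mu R+\lambda S$. Suppose that there are invertible matrices $B\in GL(m,\mathbb{C})$, $C\in GL(n,\mathbb{C})$ and positive integers $\epsilon,\nu$ such that $B\mathcal{P}C^T=\mathrm{blockdiag}\{L_\epsilon,L_\nu^T,\tilde{\mathcal{P}}\}$ for some (possibly empty) matrix pencil $\tilde{\mathcal{P}}$ of size $(m-\epsilon-\nu-1)\times(n-\epsilon-\nu-1)$. Then $|\psi\rangle$ (and hence its whole SLOCC class $G|\psi\rangle$) lies in the null-cone.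
   Context: $G=SL(2,\mathbb{C})\times SL(m,\mathbb{C})\times SL(n,\mathbb{C})$ acts by $A\otimes B\otimes C$; the null-cone is the set of vectors $|\phi\rangle$ with $0\in\overline{G|\phi\rangle}$ (standard topology). Here $\lambda,\mu$ are formal variables, and $L_\epsilon$ is the $\epsilon\times(\epsilon+1)$ pencil with entries $\lambda$ at positions $(i,i)$ and $\mu$ at positions $(i,i+1)$, $i=1,\dots,\epsilon$, all other entries zero; $L_\nu^T$ is the transpose of $L_\nu$ (size $(\nu+1)\times\nu$). *)

(* Defs.v *)
From HB Require Import structures.
From mathcomp Require Import all_boot all_order all_algebra.
From mathcomp Require Import complex.
From mathcomp Require Export reals.
Set Implicit Arguments. Unset Strict Implicit. Unset Printing Implicit Defensive.
Import Order.TTheory GRing.Theory Num.Theory.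
Local Open Scope ring_scope.

(* A vector of C^2 ⊗ C^m ⊗ C^n, given by its coordinates psi i j k. *)
Definition tensor (K : Type) (m n : nat) := 'I_2 -> 'I_m -> 'I_n -> K.

Definition tensor_of (K : Type) (m n : nat) (R S : 'M[K]_(m, n)) : tensor K m n :=
  fun i j k => if i == ord0 then R j k else S j k.

Definition kron_act (K : nzRingType) (m n : nat)
  (A : 'M[K]_2) (B : 'M[K]_m) (C : 'M[K]_n) (psi : tensor K m n) : tensor K m n :=
  fun i j k => \sum_(i0 < 2) \sum_(j0 < m) \sum_(k0 < n)
                 A i i0 * B j j0 * C k k0 * psi i0 j0 k0.

Definition tnorm2 (R : realType) (m n : nat) (psi : tensor R[i] m n) : R[i] :=
  \sum_(i < 2) \sum_(j < m) \sum_(k < n) `|psi i j k| ^+ 2.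

(* psi is in the null-cone of G = SL(2) x SL(m) x SL(n): 0 lies in the closure
   (standard Euclidean topology) of the orbit G psi. *)
Definition in_null_cone (R : realType) (m n : nat) (psi : tensor R[i] m n) : Prop :=
  forall eps : R, 0 < eps ->
    exists (A : 'M[R[i]]_2) (B : 'M[R[i]]_m) (C : 'M[R[i]]_n),
      [/\ \det A = 1, \det B = 1, \det C = 1 &
          tnorm2 (kron_act A B C psi) < Complex (eps ^+ 2) 0].

(* A matrix pencil mu * P.1 + lambda * P.2 (first component: coefficient of mu,
   second: coefficient of lambda). *)
Definition pencil (K : Type) (p q : nat) := ('M[K]_(p, q) * 'M[K]_(p, q))%type.

(* L_eps : eps x (eps+1), lambda at (i,i), mu at (i,i+1) *)
Definition L_pencil (K : nzRingType) (e : nat) : pencil K e e.+1 :=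
  (\matrix_(i < e, j < e.+1) ((j : nat) == i.+1)%:R,
   \matrix_(i < e, j < e.+1) ((j : nat) == i)%:R).

Definition LT_pencil (K : nzRingType) (e : nat) : pencil K e.+1 e :=
  ((L_pencil K e).1^T, (L_pencil K e).2^T).

Definition pencil_of (K : Type) (m n : nat) (R S : 'M[K]_(m, n)) : pencil K m n :=
  (R, S).

Definition pencil_transform (K : nzRingType) (m n : nat)
  (B : 'M[K]_m) (C : 'M[K]_n) (P : pencil K m n) : pencil K m n :=
  (B *m P.1 *m C^T, B *m P.2 *m C^T).

Definition pencil_blockdiag (K : nzRingType) (p1 q1 p2 q2 : nat)
  (P1 : pencil K p1 q1) (P2 : pencil K p2 q2) : pencil K (p1 + p2) (q1 + q2) :=
  (block_mx P1.1 0 0 P2.1, block_mx P1.2 0 0 P2.2).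

Definition pencil_cast (K : Type) (p q p' q' : nat) (e : (p = p') * (q = q'))
  (P : pencil K p q) : pencil K p' q' := (castmx e P.1, castmx e P.2).

(* Main.v *)
Require Import Defs.
From HB Require Import structures.
From mathcomp Require Import all_boot all_order all_algebra.
From mathcomp Require Import complex reals zify.
Import Order.TTheory GRing.Theory Num.Theory.
Local Open Scope ring_scope.

Lemma kron1_slice (K : comNzRingType) m n (B : 'M[K]_m) (C : 'M[K]_n)
  (R S : 'M[K]_(m, n)) i j k :
  kron_act 1%:M B C (tensor_of R S) i j k =
  (B *m (if i == ord0 then R else S) *m C^T) j k.
Proof.
rewrite /kron_act (bigD1 i) //= [X in _ + X]big1 ?addr0; last first.
  move=> i0 ne; have {}ne : (i == i0) = false by apply/negbTE; rewrite eq_sym.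
  apply: big1 => j0 _; apply: big1 => k0 _.
  by rewrite mxE ne mulr0n !mul0r.
rewrite !mxE exchange_big; apply: eq_bigr => j0 _.
rewrite mxE eqxx mulr1n mulr_suml; apply: eq_bigr => k0 _.
rewrite /tensor_of !mxE mul1r.
by case: (i == ord0); rewrite mulrAC.
Qed.

Lemma tnorm2_scale (R : realType) m n (phi psi : tensor R[i] m n) s :
  (forall i j k, phi i j k = s * psi i j k) ->
  tnorm2 phi = `|s| ^+ 2 * tnorm2 psi.
Proof.
move=> h; rewrite /tnorm2 mulr_sumr; apply: eq_bigr => i _.
rewrite mulr_sumr; apply: eq_bigr => j _.
rewrite mulr_sumr; apply: eq_bigr => k _.
by rewrite h normrM exprMn.
Qed.

Lemma tpow_cancel (K : fieldType) (t : K) a : t != 0 -> t ^+ a * t^-1 ^+ a = 1.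
Proof. by move=> h; rewrite -exprMn mulfV ?expr1n. Qed.

Lemma final_ineq (F : numFieldType) (e2 T : F) (N : nat) :
  0 < e2 -> 0 <= T -> (0 < N)%N ->
  `|(e2 / (e2 + T + 1)) ^+ N| ^+ 2 * T < e2.
Proof.
move=> he hT hN; set t := e2 / (e2 + T + 1).
have hd : 0 < e2 + T + 1 by rewrite -addrA ltr_wpDr // ?ltW // ltr_wpDl.
have ht0 : 0 < t by rewrite divr_gt0.
have ht1 : t <= 1 by rewrite ler_pdivrMr // mul1r -addrA lerDl addr_ge0.
rewrite ger0_norm ?exprn_ge0 ?ltW // -exprM.
have hle : t ^+ (N * 2) <= t.
  have -> : (N * 2 = (N * 2).-1.+1)%N by rewrite prednK // muln_gt0 hN.
  by rewrite exprS ler_piMr ?exprn_ile1 // ltW.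
apply: (le_lt_trans (ler_wpM2r hT hle)).
rewrite /t mulrAC ltr_pdivrMr // ltr_pM2l //.
by rewrite -addrA (addrC T) addrA ltrDr addr_gt0.
Qed.
Definition TBm (K : nzRingType) e nu p (a c : K) : 'M[K]_(e + (nu.+1 + p)) :=
  block_mx a%:M 0 0 (block_mx c%:M 0 0 1%:M).
Definition TCm (K : nzRingType) e nu q (b d s : K) : 'M[K]_(e.+1 + (nu + q)) :=
  block_mx b%:M 0 0 (block_mx d%:M 0 0 s%:M).

Lemma block_scale (K : comNzRingType) e nu p q (X : 'M[K]_(e, e.+1))
  (Y : 'M[K]_(nu.+1, nu)) (Z : 'M[K]_(p, q)) (a b c d s : K) :
  a * b = s -> c * d = s ->
  @TBm K e nu p a c *m block_mx X 0 0 (block_mx Y 0 0 Z) *m @TCm K e nu q b d s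
  = s *: block_mx X 0 0 (block_mx Y 0 0 Z).
Proof.
move=> hab hcd; rewrite /TBm /TCm !mulmx_block !(mulmx0, mul0mx, addr0, add0r).
rewrite !mulmx_block !(mulmx0, mul0mx, addr0, add0r).
rewrite !mul_scalar_mx !mul_mx_scalar ?scale1r !scalerA !scale_block_mx !scaler0.
by rewrite (mulrC b) hab (mulrC d) hcd.
Qed.

Lemma TCm_tr (K : nzRingType) e nu q (b d s : K) : (@TCm K e nu q b d s)^T = @TCm K e nu q b d s.
Proof. by rewrite /TCm !tr_block_mx !trmx0 !tr_scalar_mx. Qed.

Lemma det_TBm (K : comNzRingType) e nu p (a c : K) :
  \det (@TBm K e nu p a c) = a ^+ e * c ^+ nu.+1.
Proof. by rewrite /TBm !det_ublock !det_scalar expr1n mulr1. Qed.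

Lemma det_TCm (K : comNzRingType) e nu q (b d s : K) :
  \det (@TCm K e nu q b d s) = b ^+ e.+1 * (d ^+ nu * s ^+ q).
Proof. by rewrite /TCm !det_ublock !det_scalar. Qed.

Lemma det_K1 (K : comNzRingType) m (j0 : 'I_m) (x : K) :
  \det (diag_mx (\row_j (if j == j0 then x else 1))) = x.
Proof.
rewrite det_diag (bigD1 j0) //= mxE eqxx big1 ?mulr1 // => j /negbTE h.
by rewrite mxE h.
Qed.

Theorem mainTheorem8 (R : realType) (m n : nat) (Rm Sm : 'M[R[i]]_(m, n))
  (hm : (2 <= m)%N) (hmn : (m <= n)%N)
  (B : 'M[R[i]]_m) (C : 'M[R[i]]_n) (eps nu p q : nat)
  (heps : (0 < eps)%N) (hnu : (0 < nu)%N)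
  (eqm : (eps + (nu.+1 + p))%N = m) (eqn : (eps.+1 + (nu + q))%N = n)
  (Pt : pencil R[i] p q) :
  B \in unitmx -> C \in unitmx ->
  pencil_transform B C (pencil_of Rm Sm) =
    pencil_cast (eqm, eqn)
      (pencil_blockdiag (L_pencil R[i] eps)
         (pencil_blockdiag (LT_pencil R[i] nu) Pt)) ->
  in_null_cone (tensor_of Rm Sm).
Proof.
subst m n => Bu Cu.
rewrite /pencil_transform /pencil_cast /pencil_blockdiag /= !castmx_id.
case=> HR HS.
set N := (eps + nu + 1)%N; set Q := (eps.+1 + nu + q)%N.
have j0 : 'I_(eps + (nu.+1 + p)) by exists 0%N; rewrite addn_gt0 heps.
have k0 : 'I_(eps.+1 + (nu + q)) by exists 0%N.
set K1 := diag_mx (\row_j (if j == j0 then (\det B)^-1 else 1)).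
set K2 := diag_mx (\row_j (if j == k0 then (\det C)^-1 else 1)).
set E : tensor R[i] _ _ := fun i j k =>
  (K1 *m (B *m (if i == ord0 then Rm else Sm) *m C^T) *m K2) j k.
set T := tnorm2 E.
move=> e he.
set e2 : R[i] := Complex (e ^+ 2) 0.
have he2 : 0 < e2 by rewrite /e2 (_ : 0 = Complex 0 0) // ltcR exprn_gt0.
have hT : 0 <= T.
  by apply: sumr_ge0 => i _; apply: sumr_ge0 => j _; apply: sumr_ge0 => k _;
     rewrite exprn_ge0.
set t := e2 / (e2 + T + 1).
have hd : 0 < e2 + T + 1 by rewrite -addrA ltr_wpDr // ?ltW // ltr_wpDl.
have ht0 : t != 0 by rewrite gt_eqF // divr_gt0.
set TB := @TBm _ eps nu p (t ^+ (nu.+1 * Q)) (t^-1 ^+ (eps * Q)).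
set TC := @TCm _ eps nu q (t ^+ N * t^-1 ^+ (nu.+1 * Q)) (t ^+ (N + eps * Q)) (t ^+ N).
exists 1%:M, (K1 *m TB *m B), (K2 *m TC *m C); split.
- exact: det1.
- rewrite !det_mulmx det_K1 det_TBm -!exprM.
  rewrite (_ : (eps * Q * nu.+1 = nu.+1 * Q * eps)%N); last by lia.
  rewrite tpow_cancel // mulr1.
  by rewrite mulVf // -unitfE -unitmxE.
- rewrite !det_mulmx det_K1 det_TCm exprMn -!exprM.
  rewrite mulrAC -!exprD mulVf ?mul1r; last by rewrite -unitfE -unitmxE.
  rewrite mulrAC -exprD.
  rewrite (_ : (N * eps.+1 + ((N + eps * Q) * nu + N * q) = nu.+1 * Q * eps.+1)%N);
    last by rewrite /N /Q; nia.
  by rewrite tpow_cancel.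
rewrite (@tnorm2_scale _ _ _ _ E (t ^+ N)); first by apply: final_ineq; rewrite // /N addn1.
move=> i j k; rewrite kron1_slice /E.
set M := if i == ord0 then Rm else Sm.
have [X [Y [Z HM]]] : exists X Y Z, B *m M *m C^T = block_mx X 0 0 (block_mx Y 0 0 Z).
  by rewrite /M; case: (i == ord0); do 3 eexists; [exact: HR | exact: HS].
have -> : K1 *m TB *m B *m M *m (K2 *m TC *m C)^T
          = K1 *m (TB *m (B *m M *m C^T) *m TC) *m K2.
  by rewrite !trmx_mul tr_diag_mx TCm_tr !mulmxA.
rewrite !HM block_scale.
- by rewrite -scalemxAr -scalemxAl mxE.
- by rewrite mulrCA tpow_cancel ?mulr1.
- by rewrite exprD mulrCA [t^-1 ^+ _ * _]mulrC tpow_cancel ?mulr1.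
Qed.
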